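(* Let $N,\ell$ be positive integers, let $E_1,\dots,E_N>0$ and $0<\kappa\le 1$, and set $g_j=\frac{\kappa E_j}{\sum_{i=1}^N E_i}$ for $j=1,\dots,N$. Let $\Phi\in\mathbb{R}^{\ell\times N}$ be a random matrix with independent entries, where $\Phi_{ij}=\sqrt{1/g_j}$ with probability $g_j/2$, $\Phi_{ij}=0$ with probability $1-g_j$, and $\Phi_{ij}=-\sqrt{1/g_j}$ with probability $g_j/2$. For vectors $u,v\in\mathbb{R}^N$ define $x=\frac{1}{\sqrt{\ell}}\Phi u$ and $y=\frac{1}{\sqrt{\ell}}\Phi v\in\mathbb{R}^\ell$. Then $$\mathbb{E}[x^Ty]=u^Tv$$ and $$\mathrm{Var}(x^Ty)=\frac{1}{\ell}\Big((u^Tv)^2+\|u\|_2^2\|v\|_2^2+\sum_{j=1}^N\frac{1}{g_j}u_j^2v_j^2-3\sum_{j=1}^N u_j^2v_j^2\Big).$$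
   Context: $E_j$ is the energy harvested by sensor node $j$ and $\kappa$ is a sampling parameter; $g_j$ is the probability that entry $(i,j)$ of the projection matrix is nonzero. *)

(* Defs.v *)
From HB Require Import structures.
From mathcomp Require Import all_boot all_order all_algebra.
Set Implicit Arguments. Unset Strict Implicit. Unset Printing Implicit Defensive.
Import Order.TTheory GRing.Theory Num.Theory.
Local Open Scope ring_scope.

(* The random matrix Phi is modelled by its law: a sign pattern
   S : 'M['I_3]_(l,N), entry S i j = 0,1,2 meaning Phi_ij = -sqrt(1/g_j), 0,
   +sqrt(1/g_j), drawn with the product (independent entries) distribution. *)

Definition signval (R : ringType) (s : 'I_3) : R := s%:R - 1.

Definition sprob (R : fieldType) (gj : R) (s : 'I_3) : R :=
  if val s == 1%N then 1 - gj else gj / 2.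

Definition Phi_of (R : rcfType) (l N : nat) (g : 'I_N -> R)
  (S : 'M['I_3]_(l, N)) : 'M[R]_(l, N) :=
  \matrix_(i, j) (signval R (S i j) * Num.sqrt (1 / g j)).

Definition mprob (R : fieldType) (l N : nat) (g : 'I_N -> R)
  (S : 'M['I_3]_(l, N)) : R :=
  \prod_(i < l) \prod_(j < N) sprob (g j) (S i j).

Definition Expect (R : fieldType) (l N : nat) (g : 'I_N -> R)
  (F : 'M['I_3]_(l, N) -> R) : R :=
  \sum_(S : 'M['I_3]_(l, N)) mprob g S * F S.

Definition Variance (R : fieldType) (l N : nat) (g : 'I_N -> R)
  (F : 'M['I_3]_(l, N) -> R) : R :=
  Expect g (fun S => F S ^+ 2) - (Expect g F) ^+ 2.

(* Main.v *)
Require Import Defs.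
From HB Require Import structures.
From mathcomp Require Import all_boot all_order all_algebra.
From mathcomp Require Import ring lra.
Import Order.TTheory GRing.Theory Num.Theory.
Set Implicit Arguments. Unset Strict Implicit. Unset Printing Implicit Defensive.
Local Open Scope ring_scope.

Lemma factor_sum (R : comNzRingType) (l N : nat) (h : 'I_l * 'I_N -> 'I_3 -> R) :
  \sum_(S : 'M['I_3]_(l, N)) \prod_t h t (S t.1 t.2) = \prod_t \sum_s h t s.
Proof.
rewrite bigA_distr_bigA /=.
rewrite (reindex (fun S : 'M['I_3]_(l, N) => [ffun t : 'I_l * 'I_N => S t.1 t.2])) /=.
  by apply: eq_bigr => S _; apply: eq_bigr => t _; rewrite ffunE.
apply: onW_bij.
exists (fun f : {ffun 'I_l * 'I_N -> 'I_3} => \matrix_(i, j) f (i, j)).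
  by move=> S; apply/matrixP => i j; rewrite !mxE ffunE.
by move=> f; apply/ffunP => -[i j]; rewrite ffunE mxE.
Qed.

Lemma mprobE (R : fieldType) (l N : nat) (g : 'I_N -> R) (S : 'M['I_3]_(l, N)) :
  mprob g S = \prod_(t : 'I_l * 'I_N) sprob (g t.2) (S t.1 t.2).
Proof. by rewrite /mprob pair_big. Qed.

Lemma Expect_prod (R : fieldType) (l N : nat) (g : 'I_N -> R)
  (f : 'I_l * 'I_N -> 'I_3 -> R) :
  Expect g (fun S => \prod_t f t (S t.1 t.2)) =
  \prod_t \sum_s sprob (g t.2) s * f t s.
Proof.
rewrite /Expect -factor_sum; apply: eq_bigr => S _.
by rewrite mprobE -big_split.
Qed.

Lemma Expect_sum (R : fieldType) (l N : nat) (g : 'I_N -> R) (I : finType)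
  (F : I -> 'M['I_3]_(l, N) -> R) :
  Expect g (fun S => \sum_k F k S) = \sum_k Expect g (F k).
Proof.
rewrite /Expect exchange_big /=; apply: eq_bigr => S _; by rewrite mulr_sumr.
Qed.

Lemma Expect_scale (R : fieldType) (l N : nat) (g : 'I_N -> R) c
  (F : 'M['I_3]_(l, N) -> R) :
  Expect g (fun S => c * F S) = c * Expect g F.
Proof.
rewrite /Expect mulr_sumr; apply: eq_bigr => S _; by rewrite mulrCA.
Qed.

Definition phi (R : rcfType) (N : nat) (g : 'I_N -> R) (j : 'I_N) (s : 'I_3) : R :=
  signval R s * Num.sqrt (1 / g j).

Definition mom (R : rcfType) (N : nat) (g : 'I_N -> R) (j : 'I_N) (k : nat) : R :=
  \sum_s sprob (g j) s * phi g j s ^+ k.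

Lemma momE (R : rcfType) (N : nat) (g : 'I_N -> R) j k :
  mom g j k = g j / 2 * ((-1) ^+ k * Num.sqrt (1 / g j) ^+ k)
     + (1 - g j) * (0 ^+ k * Num.sqrt (1 / g j) ^+ k) + g j / 2 * Num.sqrt (1 / g j) ^+ k.
Proof.
rewrite /mom !big_ord_recr big_ord0 /= add0r /phi /signval /sprob /=.
rewrite !exprMn.
have h2 : (2 - 1 : R) = 1 by rewrite -addrA subrr addr0.
rewrite sub0r. rewrite subrr. rewrite h2. by rewrite expr1n; ring.
Qed.

Lemma mom_vals (R : rcfType) (N : nat) (g : 'I_N -> R) j : 0 < g j ->
  [/\ mom g j 0 = 1, mom g j 1 = 0, mom g j 2 = 1, mom g j 3 = 0 & mom g j 4 = (g j)^-1].
Proof.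
move=> gp; have gn : g j != 0 by rewrite gt_eqF.
have s2 : Num.sqrt (1 / g j) ^+ 2 = (g j)^-1.
  by rewrite sqr_sqrtr div1r // invr_ge0 ltW.
have s3 : Num.sqrt (1 / g j) ^+ 3 = (g j)^-1 * Num.sqrt (1 / g j) by rewrite exprS s2 mulrC.
have s4 : Num.sqrt (1 / g j) ^+ 4 = (g j)^-2 by rewrite (_ : 4 = 2 * 2)%N // exprM s2 exprVn.
split; rewrite momE ?s2 ?s3 ?s4 /=.
- by rewrite !expr0 !mul1r; field.
- by rewrite !expr1 mul0r mulr0 addr0 mulN1r mulrN addNr.
- rewrite expr0n /= mul0r mulr0 addr0 sqrrN expr1n mul1r; field; done.
- rewrite expr0n /= mul0r mulr0 addr0 exprS sqrrN expr1n mulr1; ring.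
- rewrite expr0n /= mul0r mulr0 addr0 (_ : 4 = 2 * 2)%N // exprM sqrrN !expr1n mul1r; field; done.
Qed.

Lemma prod_pow1 (R : comNzRingType) (T : finType) (x : T -> R) (p : T) :
  \prod_t x t ^+ (t == p) = x p.
Proof.
rewrite (bigD1 p) //= eqxx expr1 big1 ?mulr1 // => t /negbTE ->; by rewrite expr0.
Qed.

Lemma prod_pow2 (R : comNzRingType) (T : finType) (x : T -> R) (p q : T) :
  x p * x q = \prod_t x t ^+ ((t == p) + (t == q))%N.
Proof.
by rewrite -(prod_pow1 x p) -(prod_pow1 x q) -big_split /=; apply: eq_bigr => t _; rewrite exprD.
Qed.

Lemma prod_pow4 (R : comNzRingType) (T : finType) (x : T -> R) (p q r s : T) :
  x p * x q * x r * x s = \prod_t x t ^+ ((t == p) + (t == q) + (t == r) + (t == s))%N.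
Proof.
rewrite -(prod_pow1 x p) -(prod_pow1 x q) -(prod_pow1 x r) -(prod_pow1 x s) -!big_split /=.
by apply: eq_bigr => t _; rewrite !exprD.
Qed.

Lemma Expect_mon (R : rcfType) (l N : nat) (g : 'I_N -> R) (n : 'I_l * 'I_N -> nat) :
  Expect g (fun S => \prod_t phi g t.2 (S t.1 t.2) ^+ n t) = \prod_t mom g t.2 (n t).
Proof. exact: (Expect_prod g (fun t s => phi g t.2 s ^+ n t)). Qed.

Lemma Pz (R : rcfType) (l N : nat) (g : 'I_N -> R) (n : 'I_l * 'I_N -> nat) p :
  (forall j, 0 < g j) -> (n p == 1)%N || (n p == 3)%N -> \prod_t mom g t.2 (n t) = 0.
Proof.
move=> gp hp; rewrite (bigD1 p) //=.
have [_ m1 _ m3 _] := mom_vals (gp p.2).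
by case/orP: hp => /eqP ->; rewrite ?m1 ?m3 mul0r.
Qed.

Lemma P1 (R : rcfType) (l N : nat) (g : 'I_N -> R) (n : 'I_l * 'I_N -> nat) :
  (forall j, 0 < g j) -> (forall t, (n t == 0)%N || (n t == 2)%N) -> \prod_t mom g t.2 (n t) = 1.
Proof.
move=> gp hp; apply: big1 => t _.
have [m0 _ m2 _ _] := mom_vals (gp t.2).
by case/orP: (hp t) => /eqP ->.
Qed.

Lemma P4 (R : rcfType) (l N : nat) (g : 'I_N -> R) (n : 'I_l * 'I_N -> nat) p :
  (forall j, 0 < g j) -> n p = 4%N -> (forall t, t != p -> n t = 0%N) ->
  \prod_t mom g t.2 (n t) = (g p.2)^-1.
Proof.
move=> gp hp ho; rewrite (bigD1 p) //= big1 ?mulr1.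
  by rewrite hp; have [_ _ _ _ ->] := mom_vals (gp p.2).
move=> t /ho ->; by have [-> _ _ _ _] := mom_vals (gp t.2).
Qed.

Definition wv (R : rcfType) (l N : nat) (g : 'I_N -> R) (S : 'M['I_3]_(l, N))
  (p : 'I_l * 'I_N) : R := phi g p.2 (S p.1 p.2).

Lemma Expect_ext (R : fieldType) (l N : nat) (g : 'I_N -> R) (F G : 'M['I_3]_(l, N) -> R) :
  (forall S, F S = G S) -> Expect g F = Expect g G.
Proof. by move=> h; rewrite /Expect; apply: eq_bigr => S _; rewrite h. Qed.

Ltac prep := repeat match goal with H : is_true (?x != ?y) |- _ =>
  have := negbTE H; rewrite eq_sym in H; have := negbTE H; clear H; move=> ? ? end.
Ltac norm := rewrite ?eqxx; repeat match goal with H : (?x == ?y) = false |- context[?x == ?y] => rewrite H end.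

Lemma E2 (R : rcfType) (l N : nat) (g : 'I_N -> R) (p q : 'I_l * 'I_N) :
  (forall j, 0 < g j) ->
  Expect g (fun S => wv g S p * wv g S q) = (p == q)%:R.
Proof.
move=> gp.
rewrite (@Expect_ext _ _ _ g _ (fun S => \prod_t phi g t.2 (S t.1 t.2) ^+ ((t == p) + (t == q))%N)); last first.
  by move=> S; rewrite /wv (prod_pow2 (fun t => phi g t.2 (S t.1 t.2))).
rewrite Expect_mon.
case: (eqVneq p q) => [<-|hpq] /=.
  by rewrite (P1 gp) // => t; case: (t == p).
by rewrite (Pz (p := p) gp) //= eqxx; prep; norm.
Qed.

Lemma E4 (R : rcfType) (l N : nat) (g : 'I_N -> R) (p1 p2 p3 p4 : 'I_l * 'I_N) :
  (forall j, 0 < g j) ->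
  Expect g (fun S => wv g S p1 * wv g S p2 * wv g S p3 * wv g S p4) =
  (p1 == p2)%:R * (p3 == p4)%:R + (p1 == p3)%:R * (p2 == p4)%:R
  + (p1 == p4)%:R * (p2 == p3)%:R
  + ((g p1.2)^-1 - 3) * [&& p1 == p2, p1 == p3 & p1 == p4]%:R.
Proof.
move=> gp.
rewrite (@Expect_ext _ _ _ g _ (fun S => \prod_t phi g t.2 (S t.1 t.2) ^+
   ((t == p1) + (t == p2) + (t == p3) + (t == p4))%N)); last first.
  by move=> S; rewrite /wv (prod_pow4 (fun t => phi g t.2 (S t.1 t.2))).
rewrite Expect_mon.
case: (eqVneq p1 p2) => [<-|h12].
  case: (eqVneq p1 p3) => [<-|h13].
    case: (eqVneq p1 p4) => [<-|h14].
      rewrite (P4 (p := p1) gp) /=; first by ring.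
        by rewrite eqxx.
      by move=> t /negbTE ->.
    rewrite (Pz (p := p4) gp); prep; norm; [by rewrite /=; ring | done].
  case: (eqVneq p1 p4) => [<-|h14].
    rewrite (Pz (p := p3) gp); prep; norm; [by rewrite /=; ring | done].
  case: (eqVneq p3 p4) => [<-|h34].
    rewrite (P1 gp); prep; norm; first by rewrite /=; ring.
    move=> t; case: (eqVneq t p1) => [->|ta]; first by prep; norm.
    by case: (eqVneq t p3) => [e|tb]; [subst t|]; prep; norm.
  rewrite (Pz (p := p3) gp); prep; norm; [by rewrite /=; ring | done].
case: (eqVneq p1 p3) => [<-|h13].
  case: (eqVneq p1 p4) => [<-|h14].
    rewrite (Pz (p := p2) gp); prep; norm; [by rewrite /=; ring | done].
  case: (eqVneq p2 p4) => [<-|h24].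
    rewrite (P1 gp); prep; norm; first by rewrite /=; ring.
    move=> t; case: (eqVneq t p1) => [->|ta]; first by prep; norm.
    by case: (eqVneq t p2) => [e|tb]; [subst t|]; prep; norm.
  rewrite (Pz (p := p2) gp); prep; norm; [by rewrite /=; ring | done].
case: (eqVneq p1 p4) => [<-|h14].
  case: (eqVneq p2 p3) => [<-|h23].
    rewrite (P1 gp); prep; norm; first by rewrite /=; ring.
    move=> t; case: (eqVneq t p1) => [->|ta]; first by prep; norm.
    by case: (eqVneq t p2) => [e|tb]; [subst t|]; prep; norm.
  rewrite (Pz (p := p2) gp); prep; norm; [by rewrite /=; ring | done].
rewrite (Pz (p := p1) gp); prep; norm; [by rewrite /=; ring | done].
Qed.
Lemma sum_delta (R : comNzRingType) (T : finType) (F : T -> R) (a : T) :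
  \sum_b F b * (a == b)%:R = F a.
Proof.
rewrite (bigD1 a) //= eqxx mulr1 big1 ?addr0 // => b /negbTE; rewrite eq_sym => ->.
by rewrite mulr0.
Qed.

Lemma S1 (R : comNzRingType) (N : nat) (u v : 'I_N -> R) :
  \sum_a \sum_b \sum_c \sum_d (u a * v b * u c * v d) * ((a == b)%:R * (c == d)%:R)
  = (\sum_a u a * v a) ^+ 2.
Proof.
transitivity (\sum_a \sum_b \sum_c \sum_d ((u a * v b * (a == b)%:R) * (u c * v d)) * (c == d)%:R).
  by do 4! (apply: eq_bigr => ? _); ring.
under eq_bigr => a _ do under eq_bigr => b _ do under eq_bigr => c _ do rewrite sum_delta.
under eq_bigr => a _ do under eq_bigr => b _ do rewrite -mulr_sumr.
under eq_bigr => a _ do rewrite -mulr_suml.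
by rewrite expr2 mulr_suml; apply: eq_bigr => a _; rewrite sum_delta.
Qed.

Lemma S2 (R : comNzRingType) (N : nat) (u v : 'I_N -> R) :
  \sum_a \sum_b \sum_c \sum_d (u a * v b * u c * v d) * ((a == c)%:R * (b == d)%:R)
  = (\sum_a u a ^+ 2) * (\sum_b v b ^+ 2).
Proof.
transitivity (\sum_a \sum_b \sum_c ((u a * v b * u c) * (a == c)%:R) * \sum_d (v d * (b == d)%:R)).
  do 3! (apply: eq_bigr => ? _); rewrite mulr_sumr; apply: eq_bigr => ? _; ring.
under eq_bigr => a _ do under eq_bigr => b _ do rewrite sum_delta -mulr_suml sum_delta.
rewrite mulr_suml; apply: eq_bigr => a _; rewrite mulr_sumr; apply: eq_bigr => b _; ring.
Qed.

Lemma S3 (R : comNzRingType) (N : nat) (u v : 'I_N -> R) :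
  \sum_a \sum_b \sum_c \sum_d (u a * v b * u c * v d) * ((a == d)%:R * (b == c)%:R)
  = (\sum_a u a * v a) ^+ 2.
Proof.
transitivity (\sum_a \sum_b \sum_c ((u a * v b * u c) * (b == c)%:R) * \sum_d (v d * (a == d)%:R)).
  do 3! (apply: eq_bigr => ? _); rewrite mulr_sumr; apply: eq_bigr => ? _; ring.
under eq_bigr => a _ do under eq_bigr => b _ do rewrite sum_delta -mulr_suml sum_delta.
rewrite expr2 mulr_suml; apply: eq_bigr => a _; rewrite mulr_sumr; apply: eq_bigr => b _; ring.
Qed.

Lemma S4 (R : comNzRingType) (N : nat) (u v w : 'I_N -> R) :
  \sum_a \sum_b \sum_c \sum_d (u a * v b * u c * v d) * (w a * [&& a == b, a == c & a == d]%:R)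
  = \sum_a w a * u a ^+ 2 * v a ^+ 2.
Proof.
apply: eq_bigr => a _.
transitivity (\sum_b \sum_c ((u a * v b * u c * w a) * (a == b)%:R * (a == c)%:R) * \sum_d (v d * (a == d)%:R)).
  apply: eq_bigr => b _; apply: eq_bigr => c _; rewrite mulr_sumr; apply: eq_bigr => d _.
  case: (a == b); case: (a == c); case: (a == d) => /=; ring.
under eq_bigr => b _ do under eq_bigr => c _ do rewrite sum_delta.
under eq_bigr => b _ do rewrite -mulr_suml sum_delta.
rewrite -mulr_suml sum_delta; ring.
Qed.

Lemma sum_delta2 (R : comNzRingType) (T : finType) (F : T -> R) (a : T) :
  \sum_b (a == b)%:R * F b = F a.
Proof. rewrite -[RHS](sum_delta F a); apply: eq_bigr => b _; exact: mulrC. Qed.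

Lemma EZZ (R : comNzRingType) (N : nat) (u v w : 'I_N -> R) (beta : bool) :
  \sum_a \sum_b \sum_c \sum_d (u a * v b * u c * v d) *
   ((a == b)%:R * (c == d)%:R + (beta && (a == c))%:R * (beta && (b == d))%:R
    + (beta && (a == d))%:R * (beta && (b == c))%:R
    + (w a - 3) * [&& a == b, beta && (a == c) & beta && (a == d)]%:R)
  = (\sum_a u a * v a) ^+ 2 + beta%:R * ((\sum_a u a ^+ 2) * (\sum_b v b ^+ 2)
      + (\sum_a u a * v a) ^+ 2 + \sum_a (w a - 3) * u a ^+ 2 * v a ^+ 2).
Proof.
case: beta => /=.
  rewrite mul1r -{2}(S3 u v) -(S1 u v) -S2 -(S4 u v (fun a => w a - 3)).
  rewrite -!big_split /=; do 4! (apply: eq_bigr => ? _; rewrite -?big_split /=); ring.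
rewrite -S1 !mul0r addr0; do 4! (apply: eq_bigr => ? _).
by rewrite andbF /=; ring.
Qed.

Lemma final_alg (R : fieldType) (L A B C D F : R) : L != 0 ->
  L^-1 / L * ((A ^+ 2 * L + (B * C + A ^+ 2 + (D - 3 * F))) * L) - A ^+ 2
  = L^-1 * (A ^+ 2 + B * C + D - 3 * F).
Proof. by move=> L0; field. Qed.

Theorem proposition1 (R : rcfType) (N l : nat) (HN : (0 < N)%N) (Hl : (0 < l)%N)
  (E : 'I_N -> R) (kappa : R)
  (HE : forall j, 0 < E j) (Hk0 : 0 < kappa) (Hk1 : kappa <= 1)
  (u v : 'cV[R]_N) :
  let g := fun j : 'I_N => kappa * E j / \sum_(i < N) E i in
  let X := fun S : 'M['I_3]_(l, N) =>
    let x := (Num.sqrt l%:R)^-1 *: (Phi_of g S *m u) in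
    let y := (Num.sqrt l%:R)^-1 *: (Phi_of g S *m v) in
    (x^T *m y) 0 0 in
  Expect g X = (u^T *m v) 0 0 /\
  Variance g X =
    l%:R^-1 * (((u^T *m v) 0 0) ^+ 2 + (u^T *m u) 0 0 * (v^T *m v) 0 0
      + \sum_(j < N) (g j)^-1 * u j 0 ^+ 2 * v j 0 ^+ 2
      - 3 * \sum_(j < N) u j 0 ^+ 2 * v j 0 ^+ 2).
Proof.
move=> g X.
have sE : 0 < \sum_(i < N) E i.
  rewrite (bigD1 (Ordinal HN)) //=; apply: ltr_wpDr; last exact: HE.
  by apply: sumr_ge0 => i _; exact: ltW.
have gp : forall j, 0 < g j by move=> j; rewrite /g divr_gt0 ?mulr_gt0.
have l0 : l%:R != 0 :> R by rewrite pnatr_eq0 -lt0n.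
have sl : (Num.sqrt l%:R)^-1 ^+ 2 = l%:R^-1 :> R by rewrite exprVn sqr_sqrtr // ler0n.
pose Z (S : 'M['I_3]_(l, N)) (i : 'I_l) := \sum_(a < N) \sum_(b < N) (u a 0 * v b 0) * (wv g S (i, a) * wv g S (i, b)).
have XE : forall S, X S = l%:R^-1 * \sum_(i < l) Z S i.
  move=> S; rewrite /X mxE -sl expr2 mulr_sumr; apply: eq_bigr => i _.
  rewrite !mxE mulrACA big_distrlr /=; congr (_ * _).
  apply: eq_bigr => a _; apply: eq_bigr => b _; rewrite !mxE /wv /phi /=; ring.
have uvE : forall w w' : 'cV[R]_N, (w^T *m w') 0 0 = \sum_a w a 0 * w' a 0.
  by move=> w w'; rewrite mxE; apply: eq_bigr => a _; rewrite mxE.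
have EZ : forall i, Expect g (fun S => Z S i) = \sum_a u a 0 * v a 0.
  move=> i; rewrite /Z Expect_sum; apply: eq_bigr => a _.
  rewrite Expect_sum.
  under eq_bigr => b _ do rewrite Expect_scale (E2 _ _ gp) xpair_eqE eqxx /=.
  by rewrite sum_delta.
have EX : Expect g X = (u^T *m v) 0 0.
  rewrite (@Expect_ext _ _ _ g _ _ XE) Expect_scale Expect_sum.
  under eq_bigr => i _ do rewrite EZ.
  by rewrite sumr_const card_ord -[X in _ * X]mulr_natr mulrCA mulVf // mulr1 uvE.
split => //.
have ZZ : forall S i i', Z S i * Z S i' = \sum_a \sum_b \sum_c \sum_d
    (u a 0 * v b 0 * u c 0 * v d 0) *
    (wv g S (i, a) * wv g S (i, b) * wv g S (i', c) * wv g S (i', d)).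
  move=> S i i'; rewrite /Z mulr_suml; apply: eq_bigr => a _; rewrite mulr_suml.
  apply: eq_bigr => b _; rewrite mulr_sumr; apply: eq_bigr => c _.
  rewrite mulr_sumr; apply: eq_bigr => d _; ring.
have EZZ' : forall i i', Expect g (fun S => Z S i * Z S i') =
   (\sum_a u a 0 * v a 0) ^+ 2 + (i == i')%:R * ((\sum_a u a 0 ^+ 2) * (\sum_b v b 0 ^+ 2)
      + (\sum_a u a 0 * v a 0) ^+ 2 + \sum_a ((g a)^-1 - 3) * u a 0 ^+ 2 * v a 0 ^+ 2).
  move=> i i'.
  apply: (etrans _ (EZZ (fun a => u a 0) (fun a => v a 0) (fun a => (g a)^-1) (i == i'))).
  rewrite (@Expect_ext _ _ _ g _ _ (fun S => ZZ S i i')) Expect_sum; apply: eq_bigr => a _.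
  rewrite Expect_sum; apply: eq_bigr => b _.
  rewrite Expect_sum; apply: eq_bigr => c _.
  rewrite Expect_sum; apply: eq_bigr => d _.
  by rewrite Expect_scale (E4 _ _ _ _ gp) !xpair_eqE !eqxx /=.
have X2 : forall S, X S ^+ 2 = l%:R^-1 * l%:R^-1 * \sum_i \sum_i' Z S i * Z S i'.
  move=> S; rewrite XE expr2 mulrACA; congr (_ * _).
  by rewrite mulr_suml; apply: eq_bigr => i _; rewrite mulr_sumr.
rewrite /Variance EX (@Expect_ext _ _ _ g _ _ X2) Expect_scale Expect_sum.
under eq_bigr => i _ do rewrite Expect_sum.
under eq_bigr => i _ do under eq_bigr => i' _ do rewrite EZZ'.
under eq_bigr => i _ do rewrite big_split /= sumr_const card_ord.
under eq_bigr => i _ do rewrite sum_delta2.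
rewrite sumr_const card_ord !uvE.
have -> : \sum_a ((g a)^-1 - 3) * u a 0 ^+ 2 * v a 0 ^+ 2 =
    \sum_(j < N) (g j)^-1 * u j 0 ^+ 2 * v j 0 ^+ 2
      - 3 * \sum_(j < N) u j 0 ^+ 2 * v j 0 ^+ 2.
  by rewrite mulr_sumr -sumrB; apply: eq_bigr => a _; ring.
have -> : \sum_a u a 0 * u a 0 = \sum_a u a 0 ^+ 2 by apply: eq_bigr => a _; rewrite expr2.
have -> : \sum_a v a 0 * v a 0 = \sum_a v a 0 ^+ 2 by apply: eq_bigr => a _; rewrite expr2.
rewrite -[(_ + _) *+ l]mulr_natr -[(_ ^+ 2) *+ l]mulr_natr.
exact: final_alg.
Qed.
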